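(* Let $p$ be an odd prime, let $n\geq m$ be positive integers, and let $G=\langle a,b\mid a^{p^n}=b^{p^m}=1,\ ab=ba\rangle\cong C_{p^n}\times C_{p^m}$. Then: \begin{enumerate} \item $G$ has exactly one irreducible rational representation of degree $1$ (up to equivalence). \item For each $r$ with $1\leq r\leq m$, $G$ has exactly $2\sum_{k=0}^{r-1}\phi(p^k)+\phi(p^r)=p^r+p^{r-1}$ inequivalent irreducible rational representations of degree $\phi(p^r)$. \item For each $r$ with $m<r\leq n$, $G$ has exactly $\sum_{k=0}^{m}\phi(p^k)=p^m$ inequivalent irreducible rational representations of degree $\phi(p^r)$. \end{enumerate}
   Context: $\phi$ denotes Euler's totient function. An irreducible rational representation means an irreducible representation over $\mathbb{Q}$. *)

(* Defs.v *)
From mathcomp Require Import all_boot all_order all_algebra all_fingroup all_solvable.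
From mathcomp Require Import gproduct mxrepresentation.
Set Implicit Arguments. Unset Strict Implicit. Unset Printing Implicit Defensive.

Definition irr_count_of_degree (F : fieldType) (gT : finGroupType)
    (G : {group gT}) (d N : nat) : Prop :=
  exists reps : 'I_N -> mx_representation F G d,
    [/\ forall i, mx_irreducible (reps i),
        forall i j, mx_rsim (reps i) (reps j) -> i = j
      & forall rG : mx_representation F G d, mx_irreducible rG ->
          exists i, mx_rsim rG (reps i)].

(* Main.v *)
Require Import Defs.
From mathcomp Require Import all_boot all_order all_algebra all_fingroup all_solvable all_field.
From mathcomp Require Import gproduct mxrepresentation zify.
Set Implicit Arguments. Unset Strict Implicit. Unset Printing Implicit Defensive.
Import GRing.Theory Num.Theory.
Local Open Scope ring_scope.
Section RingFacts.
Variable R : nzRingType.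

Lemma geom_tel (y : R) k : (\sum_(i < k) y ^+ i) * (y - 1) = y ^+ k - 1.
Proof.
elim: k => [|k IH]; first by rewrite big_ord0 mul0r expr0 subrr.
rewrite big_ord_recr /= mulrDl IH mulrBr mulr1 -exprSr.
by rewrite addrC addrA subrK addrC.
Qed.

Lemma expr_gcd1 (x : R) u v : x ^+ u = 1 -> x ^+ v = 1 -> x ^+ (gcdn u v) = 1.
Proof.
elim/ltn_ind: v u => v IH u xu xv.
case: v IH xv => [|v] IH xv; first by rewrite gcdn0.
rewrite -gcdn_modl gcdnC; apply: IH => //.
  by rewrite ltn_mod.
by move: xu; rewrite {1}(divn_eq u v.+1) exprD mulnC exprM xv expr1n mul1r.
Qed.

Lemma expr_pord (x : R) p e k : prime p -> x ^+ (p ^ e.+1) = 1 ->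
  x ^+ (p ^ e) != 1 -> x ^+ k = 1 -> (p ^ e.+1 %| k)%N.
Proof.
move=> pp xq xq' xk.
have := expr_gcd1 xk xq; have /(dvdn_pfactor _ _ pp) [j le_j] := dvdn_gcdr k (p ^ e.+1).
move=> Eg; rewrite Eg => xj.
have [ej | ltj] := eqVneq j e.+1.
  by rewrite -ej -Eg dvdn_gcdl.
have lje : (j <= e)%N by rewrite -ltnS ltn_neqAle ltj le_j.
case/negP: xq'; apply/eqP.
by rewrite -(subnK lje) expnD mulnC exprM xj expr1n.
Qed.

End RingFacts.

(* cyclotomic-like polynomial Phi_{p^(e+1)} *)
Definition Phi (p e : nat) : {poly rat} := \sum_(k < p) 'X^(k * p ^ e).

Lemma Phi_size_monic p e : (1 < p)%N ->
  size (Phi p e) = (p.-1 * p ^ e).+1 /\ Phi p e \is monic.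
Proof.
case: p => [|[|p']] //= _.
rewrite /Phi big_ord_recr /=.
set S := \sum_(i < p'.+1) _.
have pe0 : (0 < p'.+2 ^ e)%N by rewrite expn_gt0.
have hS : (size S < size ('X^(p'.+1 * p'.+2 ^ e) : {poly rat}))%N.
  rewrite size_polyXn ltnS; apply: leq_trans (size_sum _ _ _) _.
  apply/bigmax_leqP => i _; rewrite size_polyXn.
  by rewrite ltn_mul2r pe0 ltn_ord.
rewrite addrC size_polyDl // size_polyXn; split=> //.
by rewrite monicE lead_coefDl // lead_coefXn.
Qed.

Section RingFacts2.
Variable R : nzRingType.
Lemma expr_mod (x : R) q k : x ^+ q = 1 -> x ^+ (k %% q) = x ^+ k.
Proof. by move=> xq; rewrite {2}(divn_eq k q) exprD mulnC exprM xq expr1n mul1r. Qed.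
Lemma expr_dvd1 (x : R) q k : x ^+ q = 1 -> (q %| k)%N -> x ^+ k = 1.
Proof. by move=> xq /dvdnP [c ->]; rewrite mulnC exprM xq expr1n. Qed.
End RingFacts2.
Lemma band (q k : nat) : (q %| k)%N -> (0 < k)%N -> (k < 2 * q)%N -> k = q.
Proof.
case/dvdnP => c ->; case: c => [|[|c]] //=; first by rewrite mul1n.
by rewrite !mulSn => _; lia.
Qed.

Lemma ar_pos (q u w : nat) : (u < q)%N -> (0 < q - u + w)%N.
Proof. lia. Qed.
Lemma ar_lt (q u w : nat) : (u < q)%N -> (w < q)%N -> (q - u + w < 2 * q)%N.
Proof. lia. Qed.
Lemma ar_eq (q u w : nat) : (u < q)%N -> (q - u + w = q)%N -> w = u.
Proof. lia. Qed.

Local Notation pQtoC := (map_poly (ratr : rat -> algC)).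

Lemma Phi_coprime p e (q : {poly rat}) : prime p -> q != 0 ->
  (size q <= p.-1 * p ^ e)%N -> coprimep (Phi p e) q.
Proof.
move=> pp nzq szq; have p1 := prime_gt1 pp.
have [SP monP] := Phi_size_monic e p1.
have Q0 : (0 < p ^ e.+1)%N by rewrite expn_gt0 prime_gt0.
have [z prim_z] := C_prim_root_exists Q0.
have rootPhi : root (map_poly (ratr : rat -> algC) (Phi p e)) z.
  rewrite /Phi rmorph_sum /root horner_sum.
  set w := z ^+ (p ^ e).
  have -> : \sum_(i < p) (map_poly (ratr : rat -> algC) 'X^(i * p ^ e)).[z] = \sum_(i < p) w ^+ i.
    by apply: eq_bigr => i _; rewrite map_polyXn hornerXn mulnC exprM.
  have w1 : w - 1 != 0.
    rewrite subr_eq0 -(prim_order_dvd prim_z); apply/negP => /dvdn_leq.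
    rewrite expn_gt0 prime_gt0 // => /(_ isT).
    by rewrite leqNgt ltn_exp2l // ltnSn.
  have := geom_tel w p; rewrite /w -exprM -expnSr prim_expr_order // subrr.
  by move/eqP; rewrite mulf_eq0 (negPf w1) orbF.
have [pQ [DpQ monpQ] dvpQ] := minCpolyP z.
have szpQ : size pQ = (p.-1 * p ^ e).+1.
  rewrite -(size_map_poly (ratr : {rmorphism rat -> algC})) -DpQ (minCpoly_cyclotomic prim_z).
  by rewrite size_cyclotomic totient_pfactor.
have nzP : Phi p e != 0 by apply: monic_neq0.
set g := gcdp (Phi p e) q.
have [h Dh] := dvdpP _ _ (dvdp_gcdl (Phi p e) q).
have nzg : g != 0 by rewrite gcdp_eq0 negb_and nzP.
have nzh : h != 0 by apply: contraNneq nzP => h0; rewrite Dh h0 mul0r.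
rewrite /coprimep -/g.
move: rootPhi; rewrite Dh rmorphM /root hornerM mulf_eq0 => /orP[rh | rg].
  have /(dvdp_leq nzh) : pQ %| h by rewrite -dvpQ.
  have := size_mul nzh nzg; rewrite -Dh SP szpQ => E.
  rewrite -size_poly_eq0 in nzg.
  move: nzg E; case: (size g) => [|[|k]] //= _.
  rewrite addnS /= => ->. 
  by rewrite -{2}[size h]addn0 leq_add2l.
have : pQ %| q by rewrite (dvdp_trans _ (dvdp_gcdr (Phi p e) q)) // -dvpQ.
by move/(dvdp_leq nzq); rewrite szpQ leqNgt ltnS szq.
Qed.

Section Companion.
Variables (F : fieldType) (N : nat) (P : {poly F}).
Hypotheses (monP : P \is monic) (szP : size P = N.+2).

Definition compan : 'M[F]_N.+1 :=
  \matrix_(i, j) (if (i < N)%N then ((j : nat) == i.+1)%:R else - P`_j).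
Local Notation C := compan.
Local Notation e0 := (delta_mx 0 0 : 'rV[F]_N.+1).

Lemma horner_mx_expand n (M : 'M[F]_n.+1) (Q : {poly F}) :
  horner_mx M Q = \sum_(i < size Q) Q`_i *: M ^+ i.
Proof.
rewrite -{1}[Q]coefK poly_def rmorph_sum; apply: eq_bigr => i _.
by rewrite -mul_polyC rmorphM /= horner_mx_C rmorphXn /= horner_mx_X -mulmxE mul_scalar_mx.
Qed.

Lemma horner_mx_P n (M : 'M[F]_n.+1) :
  horner_mx M P = \sum_(i < N.+1) P`_i *: M ^+ i + M ^+ N.+1.
Proof.
rewrite horner_mx_expand szP big_ord_recr /=; congr (_ + _).
have := monP; rewrite monicE lead_coefE szP => /eqP ->.
by rewrite scale1r.
Qed.

Lemma rowC_lt (i : 'I_N.+1) (lt_iN : (i < N)%N) :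
  row i C = delta_mx 0 (Ordinal (lt_iN : (i.+1 < N.+1)%N)).
Proof.
by apply/rowP => j; rewrite !mxE lt_iN /=.
Qed.

Lemma rowC_N : row ord_max C = - \row_j P`_j.
Proof. by apply/rowP => j; rewrite !mxE /= ltnn. Qed.

Lemma sum_delta_P : \sum_(i < N.+1) P`_i *: (delta_mx 0 i : 'rV[F]_N.+1) = \row_j P`_j.
Proof.
by rewrite [RHS]row_sum_delta; apply: eq_bigr => i _; rewrite mxE.
Qed.

Lemma e0_Cexp (k : 'I_N.+1) : e0 *m C ^+ k = delta_mx 0 k.
Proof.
case: k => k; elim: k => [|k IH] lt_k.
  by rewrite expr0 mulmx1; congr delta_mx; apply: val_inj.
have lt_k' : (k < N.+1)%N by apply: ltnW.
rewrite exprSr -mulmxE mulmxA IH -rowE.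
by rewrite (@rowC_lt (Ordinal lt_k') lt_k); congr delta_mx; apply: val_inj.
Qed.

Lemma e0_CN1 : e0 *m C ^+ N.+1 = - \row_j P`_j.
Proof.
rewrite exprSr -mulmxE mulmxA (e0_Cexp ord_max) -rowE rowC_N //.
Qed.

Lemma compan_root : horner_mx C P = 0.
Proof.
set X := horner_mx C P.
have e0X : e0 *m X = 0.
  rewrite /X horner_mx_P mulmxDr e0_CN1 mulmx_sumr.
  rewrite (eq_bigr (fun i : 'I_N.+1 => P`_i *: (delta_mx 0 i : 'rV[F]_N.+1))).
    by rewrite sum_delta_P subrr.
  by move=> i _; rewrite -scalemxAr e0_Cexp.
apply/row_matrixP => i; rewrite row0 rowE -(e0_Cexp i) -mulmxA.
have -> : C ^+ i *m X = X *m C ^+ i.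
  have -> : C ^+ i = horner_mx C ('X^i) by rewrite rmorphXn /= horner_mx_X.
  by rewrite /X mulmxE -!rmorphM /= mulrC.
by rewrite mulmxA e0X mul0mx.
Qed.

Lemma compan_intertwine n (M : 'M[F]_n.+1) (v : 'rV[F]_n.+1) :
  horner_mx M P = 0 ->
  C *m (\matrix_(i < N.+1) (v *m M ^+ i)) = (\matrix_(i < N.+1) (v *m M ^+ i)) *m M.
Proof.
move=> PM0; set W := \matrix_(i < N.+1) _.
apply/row_matrixP => i; rewrite !row_mul rowK.
have [lt_iN | ge_iN] := ltnP i N.
  rewrite (rowC_lt lt_iN) -rowE rowK /=.
  by rewrite exprSr -mulmxE mulmxA.
have -> : i = ord_max by apply: val_inj; apply/eqP; rewrite eqn_leq ge_iN -ltnS ltn_ord.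
rewrite rowC_N mulNmx mulmx_sum_row -mulmxA mulmxE -exprSr /=.
have := PM0; rewrite horner_mx_P => /eqP; rewrite addrC addr_eq0 => /eqP ->.
rewrite mulmxN mulmx_sumr; congr (- _); apply: eq_bigr => j _.
by rewrite mxE rowK scalemxAr.
Qed.

End Companion.

Section CompanIrr.
Variables (F : fieldType) (N : nat) (P : {poly F}).
Hypotheses (monP : P \is monic) (szP : size P = N.+2).
Hypothesis coP : forall q : {poly F}, q != 0 -> (size q <= N.+1)%N -> coprimep P q.
Local Notation C := (compan N P).

Lemma horner_mx_poly n (M : 'M[F]_n.+1) k (E : nat -> F) :
  horner_mx M (\poly_(i < k) E i) = \sum_(i < k) E i *: M ^+ i.
Proof.
rewrite poly_def rmorph_sum; apply: eq_bigr => i _.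
by rewrite -mul_polyC rmorphM /= horner_mx_C rmorphXn /= horner_mx_X -mulmxE mul_scalar_mx.
Qed.

Lemma compan_irr (gT : finGroupType) (G : {group gT})
   (rG : mx_representation F G N.+1) g0 :
  g0 \in G -> rG g0 = C -> mx_irreducible rG.
Proof.
move=> Gg0 rg0; apply/mx_irrP; split=> // U modU nzU.
set v := nz_row U.
have nzv : v != 0 by rewrite nz_row_eq0.
have UC : (U *m C <= U)%MS by rewrite -rg0; apply: (mxmoduleP modU).
have vCk k : (v *m C ^+ k <= U)%MS.
  elim: k => [|k IH]; first by rewrite expr0 mulmx1 nz_row_sub.
  by rewrite exprSr -mulmxE mulmxA (submx_trans (submxMr C IH)).
set W := \matrix_(i < N.+1) (v *m C ^+ i).
have WU : (W <= U)%MS by apply/row_subP => i; rewrite rowK.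
have freeW : row_free W.
  apply: inj_row_free => c cW0.
  set s := \poly_(i < N.+1) c 0 (inord i).
  have vs : v *m horner_mx C s = 0.
    rewrite horner_mx_poly mulmx_sumr; rewrite mulmx_sum_row in cW0.
    rewrite -[RHS]cW0; apply: eq_bigr => i _.
    by rewrite rowK scalemxAr inord_val.
  apply/eqP; apply: contraT => nzc.
  have nzs : s != 0.
    apply: contraNneq nzc => s0; apply/eqP/rowP => i.
    by have := congr1 (fun q : {poly F} => q`_i) s0; rewrite coef_poly ltn_ord coef0 inord_val !mxE.
  have /Bezout_coprimepP [[u1 u2] /=] := coP nzs (size_poly _ _).
  rewrite -size_poly_eq1 => /size_poly1P [c0 nzc0 Dc].
  have := congr1 (horner_mx C) Dc; rewrite horner_mx_C rmorphD !rmorphM /=.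
  rewrite compan_root // mulr0 add0r => Hc.
  have : v *m c0%:M = 0.
    by rewrite -Hc -rmorphM /= mulrC rmorphM /= -mulmxE mulmxA vs mul0mx.
  by rewrite (mul_mx_scalar c0 v) => /eqP; rewrite scaler_eq0 (negPf nzc0) (negPf nzv).
rewrite /row_full eqn_leq rank_leq_col /=.
by rewrite -{1}(eqP freeW) mxrankS.
Qed.

End CompanIrr.

Lemma rsim_of_hom (F : fieldType) (gT : finGroupType) (G : {group gT}) n1 n2
    (rG1 : mx_representation F G n1) (rG2 : mx_representation F G n2)
    (f : 'M[F]_(n1, n2)) :
  mx_irreducible rG1 -> mx_irreducible rG2 -> f != 0 ->
  (forall x, x \in G -> rG1 x *m f = f *m rG2 x) -> mx_rsim rG1 rG2.
Proof.
move=> /mx_irrP[_ irr1] /mx_irrP[_ irr2] nzf hom.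
have modK : mxmodule rG1 (kermx f).
  apply/mxmoduleP => x Gx; apply/sub_kermxP; rewrite -mulmxA hom // mulmxA.
  by rewrite mulmx_ker mul0mx.
have freef : row_free f.
  rewrite -kermx_eq0; apply: contraT => nzK.
  have := irr1 _ modK nzK; rewrite -sub1mx => /sub_kermxP.
  by rewrite mul1mx => f0; rewrite f0 eqxx in nzf.
have modf : mxmodule rG2 <<f>>%MS.
  rewrite (eqmx_module _ (genmxE f)); apply/mxmoduleP => x Gx.
  by rewrite -hom // submxMl.
have fullf : row_full <<f>>%MS by apply: irr2; rewrite // -mxrank_eq0 mxrank_gen mxrank_eq0.
have e12 : n1 = n2.
  apply: etrans (esym (eqP freef)) _; rewrite -mxrank_gen; exact: eqP fullf.
by exists f.
Qed.

Section PhiCompanion.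
Variables (p e : nat).
Hypotheses (pp : prime p) (p3 : (2 < p)%N).

Definition NP := (p.-1 * p ^ e).-1.
Definition CP : 'M[rat]_NP.+1 := compan NP (Phi p e).

Lemma NP_S : NP.+1 = (p.-1 * p ^ e)%N.
Proof.
have p1 : (0 < p.-1)%N by move: p3; case: (p) => [|[|]].
by rewrite /NP prednK // muln_gt0 p1 expn_gt0 (prime_gt0 pp).
Qed.

Lemma Phi_sz : size (Phi p e) = NP.+2.
Proof. by rewrite NP_S; case: (Phi_size_monic e (prime_gt1 pp)). Qed.

Lemma Phi_monic : Phi p e \is monic.
Proof. by case: (Phi_size_monic e (prime_gt1 pp)). Qed.

Lemma Phi_coP (q : {poly rat}) : q != 0 -> (size q <= NP.+1)%N -> coprimep (Phi p e) q.
Proof. by rewrite NP_S; apply: Phi_coprime. Qed.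

Lemma Phi_tel n (M : 'M[rat]_n.+1) :
  horner_mx M (Phi p e) * (M ^+ (p ^ e) - 1) = M ^+ (p ^ e.+1) - 1.
Proof.
rewrite /Phi rmorph_sum /=.
rewrite (eq_bigr (fun i : 'I_p => (M ^+ (p ^ e)) ^+ i)); last first.
  by move=> i _; rewrite rmorphXn /= horner_mx_X mulnC exprM.
by rewrite geom_tel -exprM -expnSr.
Qed.

Lemma CP_q : CP ^+ (p ^ e.+1) = 1.
Proof.
have := Phi_tel CP; rewrite compan_root ?Phi_monic ?Phi_sz // mul0r.
by move/eqP; rewrite eq_sym subr_eq0 => /eqP.
Qed.

Lemma CP_q' : CP ^+ (p ^ e) != 1.
Proof.
have lt : (p ^ e < NP.+1)%N.
  rewrite NP_S -{1}[(p ^ e)%N]mul1n ltn_mul2r expn_gt0 prime_gt0 //=.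
  by rewrite -ltnS prednK ?prime_gt0.
apply/eqP => C1.
have := @e0_Cexp _ _ (Phi p e) (Ordinal lt); rewrite /= -/CP C1 mulmx1.
move/(congr1 (fun A : 'rV[rat]_NP.+1 => A 0 0)); rewrite !mxE /=.
have pe : (0 < p ^ e)%N by rewrite expn_gt0 prime_gt0.
by rewrite -val_eqE /= eq_sym (negPf (lt0n_neq0 pe)) => /eqP; rewrite oner_eq0.
Qed.

Lemma CP_irr (gT : finGroupType) (G : {group gT}) (rG : mx_representation rat G NP.+1) g0 :
  g0 \in G -> rG g0 = CP -> mx_irreducible rG.
Proof. by apply: compan_irr; [apply: Phi_monic | apply: Phi_sz | apply: Phi_coP]. Qed.

Lemma schur_Phi (gT : finGroupType) (G : {group gT}) n (rG : mx_representation rat G n.+1) M :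
  mx_irreducible rG -> centgmx rG M -> M ^+ (p ^ e.+1) = 1 -> M ^+ (p ^ e) != 1 ->
  horner_mx M (Phi p e) = 0.
Proof.
move=> irrG cM Mq Mq'.
set N0 := M ^+ (p ^ e) - 1.
have cN0 : centgmx rG N0.
  apply/centgmxP => x Gx; have cMx := centgmxP cM x Gx.
  rewrite /N0 mulmxBl mulmxBr mul1mx mulmx1; congr (_ - _).
  elim: (p ^ e)%N => [|k IH]; first by rewrite expr0 mul1mx mulmx1.
  by rewrite exprS -mulmxE -mulmxA IH !mulmxA cMx.
have uN0 : N0 \in unitmx by apply: (mx_Schur irrG) => //; rewrite subr_eq0.
have := Phi_tel M; rewrite Mq subrr -/N0 => H.
by rewrite -(mulmxK uN0 (horner_mx M (Phi p e))) mulmxE H mul0r.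
Qed.

End PhiCompanion.

Section MkRep.
Variables (F : fieldType) (gT : finGroupType) (G : {group gT}) (a b : gT).
Hypothesis defG : (<[a]> \x <[b]>)%g = G.

Lemma Ga : a \in G.
Proof.
have [_ defAB _ _] := dprodP defG.
by rewrite -defAB (subsetP (mulg_subl _ (group1 _))) ?cycle_id.
Qed.

Lemma Gb : b \in G.
Proof.
have [_ defAB _ _] := dprodP defG.
by rewrite -defAB (subsetP (mulg_subr _ (group1 _))) ?cycle_id.
Qed.

Lemma repr_pow_hom n1 n2 (rG1 : mx_representation F G n1) (rG2 : mx_representation F G n2) f g i :
  g \in G -> rG1 g *m f = f *m rG2 g -> rG1 (g ^+ i)%g *m f = f *m rG2 (g ^+ i)%g.
Proof.
move=> Gg hg; elim: i => [|i IH].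
  have h1 := repr_mx1 rG1; have h2 := repr_mx1 rG2.
  by rewrite expg0 h1 h2 mul1mx mulmx1.
have Ggi : (g ^+ i)%g \in G by rewrite groupX.
have h1 := repr_mxM rG1 Gg Ggi; have h2 := repr_mxM rG2 Gg Ggi.
by rewrite expgS h1 h2 -mulmxA IH !mulmxA hg.
Qed.

Lemma gen_hom n1 n2 (rG1 : mx_representation F G n1) (rG2 : mx_representation F G n2) f :
  rG1 a *m f = f *m rG2 a -> rG1 b *m f = f *m rG2 b ->
  forall g, g \in G -> rG1 g *m f = f *m rG2 g.
Proof.
move=> ha hb g Gg; have [_ defAB _ _] := dprodP defG.
have : g \in (<[a]> * <[b]>)%g by rewrite defAB.
case/mulsgP => [x y /cycleP [i ->] /cycleP [j ->] ->].
have Gai : (a ^+ i)%g \in G by rewrite groupX ?Ga.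
have Gbj : (b ^+ j)%g \in G by rewrite groupX ?Gb.
have h1 := repr_mxM rG1 Gai Gbj; have h2 := repr_mxM rG2 Gai Gbj.
rewrite h1 h2 -mulmxA (repr_pow_hom _ Gb hb) !mulmxA (repr_pow_hom _ Ga ha) //.
Qed.

Lemma gen_eq n (rG1 rG2 : mx_representation F G n) :
  rG1 a = rG2 a -> rG1 b = rG2 b -> mx_rsim rG1 rG2.
Proof.
move=> ha hb; exists 1%:M => //; first by rewrite row_free_unit unitmx1.
by apply: gen_hom => [|]; rewrite mul1mx mulmx1 ?ha ?hb.
Qed.

Variables (n Q' x y : nat) (C : 'M[F]_n.+1).
Hypotheses (Cq : C ^+ Q'.+1 = 1) (hA : (Q'.+1 %| x * #[a]%g)%N) (hB : (Q'.+1 %| y * #[b]%g)%N).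

Lemma Cmod k : C ^+ (k %% Q'.+1) = C ^+ k.
Proof. by rewrite {2}(divn_eq k Q'.+1) exprD mulnC exprM Cq expr1n mul1r. Qed.

Let Zt := 'I_Q'.+1.
Let u : Zt := ((Zp1 : Zt) ^+ x)%g.
Let v : Zt := ((Zp1 : Zt) ^+ y)%g.

Lemma ou : (#[u]%g %| #[a]%g)%N.
Proof. by rewrite order_dvdn -expgM -order_dvdn order_Zp1. Qed.
Lemma ov : (#[v]%g %| #[b]%g)%N.
Proof. by rewrite order_dvdn -expgM -order_dvdn order_Zp1. Qed.

Local Notation fA := (eltm_morphism ou).
Local Notation fB := (eltm_morphism ov).

Lemma cAB : (fB @* <[b]> \subset 'C(fA @* <[a]>))%g.
Proof. exact: subset_trans (subsetT _) (centsS (subsetT _) (Zp_abelian Q')). Qed.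

Local Notation Fm := (dprodm defG cAB).

Definition mkrep_fun (g : gT) : 'M[F]_n.+1 := C ^+ (nat_of_ord (Fm g)).

Lemma mkrep_is_repr : mx_repr G mkrep_fun.
Proof.
split; first by rewrite /mkrep_fun morph1 expr0.
move=> g h Gg Gh; rewrite /mkrep_fun morphM //= Cmod exprD mulmxE //.
Qed.

Definition mkrep := MxRepresentation mkrep_is_repr.

Lemma valZ k : ((Zp1 : Zt) ^+ k)%g = (k %% Q'.+1)%N :> nat.
Proof. by rewrite Zp_expg /= modnMml mul1n. Qed.

Lemma mkrep_a : mkrep a = C ^+ x.
Proof.
by rewrite /= /mkrep_fun dprodmEl ?cycle_id //= eltm_id valZ Cmod.
Qed.

Lemma mkrep_b : mkrep b = C ^+ y.
Proof.
by rewrite /= /mkrep_fun dprodmEr ?cycle_id //= eltm_id valZ Cmod.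
Qed.

End MkRep.

Section Cyc.
Variables (F : fieldType) (gT : finGroupType) (G : {group gT}) (a b : gT).
Hypothesis defG : (<[a]> \x <[b]>)%g = G.
Variables (p n m : nat).
Hypotheses (pp : prime p) (oa : #[a]%g = (p ^ n)%N) (ob : #[b]%g = (p ^ m)%N).

Lemma abelG : abelian G.
Proof.
have [_ defAB cAB _] := dprodP defG.
by rewrite -defAB abelianM !cycle_abelian cAB.
Qed.

Lemma irr_cyc N (rG : mx_representation F G N.+1) : mx_irreducible rG ->
  (exists k, rG b = rG a ^+ k) \/ (exists k, rG a = rG b ^+ k).
Proof.
move=> irrG.
have irrq : mx_irreducible (kquo_repr rG) := (quo_mx_irr (subxx _) (rker_norm rG)).2 irrG.
have cycq : cyclic (G / rker rG)%g.
  apply: (mx_faithful_irr_abelian_cyclic (kquo_mx_faithful rG) irrq).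
  exact: quotient_abelian abelG.
set K := rker_group rG.
have Ga' := Ga defG; have Gb' := Gb defG.
have nKG := rker_norm rG.
set a' := coset K a; set b' := coset K b.
have Qa : a' \in (G / K)%g by apply: mem_quotient.
have Qb : b' \in (G / K)%g by apply: mem_quotient.
have [i _ oa'] : exists2 i, (i <= n)%N & #[a']%g = (p ^ i)%N.
  apply/(dvdn_pfactor _ _ pp); rewrite -oa.
  exact: (morph_order (coset_morphism K) (subsetP nKG _ Ga')).
have [j _ ob'] : exists2 j, (j <= m)%N & #[b']%g = (p ^ j)%N.
  apply/(dvdn_pfactor _ _ pp); rewrite -ob.
  exact: (morph_order (coset_morphism K) (subsetP nKG _ Gb')).
have sa : (<[a']> \subset G / K)%g by rewrite cycle_subG.
have sb : (<[b']> \subset G / K)%g by rewrite cycle_subG.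
have [le_ij | le_ji] := leqP i j.
  right.
  have : (<[a']> \subset <[b']>)%g.
    by rewrite -(cardSg_cyclic cycq sa sb) -!orderE oa' ob' dvdn_exp2l.
  move/subsetP/(_ a' (cycle_id a'))/cycleP => [k Ek]; exists k.
  have := kquo_repr_coset rG Ga'; rewrite -/K -/a' Ek repr_mxX //.
  by rewrite kquo_repr_coset.
left.
have : (<[b']> \subset <[a']>)%g.
  by rewrite -(cardSg_cyclic cycq sb sa) -!orderE oa' ob' dvdn_exp2l // ltnW.
move/subsetP/(_ b' (cycle_id b'))/cycleP => [k Ek]; exists k.
have := kquo_repr_coset rG Gb'; rewrite -/K -/b' Ek repr_mxX //.
by rewrite kquo_repr_coset.
Qed.

End Cyc.

Section Main.
Variables (gT : finGroupType) (G : {group gT}) (a b : gT).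
Hypothesis defG : (<[a]> \x <[b]>)%g = G.
Variables (p n m : nat).
Hypotheses (pp : prime p) (p3 : (2 < p)%N) (le_mn : (m <= n)%N)
  (oa : #[a]%g = (p ^ n)%N) (ob : #[b]%g = (p ^ m)%N).

Let Ga := Ga defG.
Let Gb := Gb defG.

Lemma repr_ab N (rG : mx_representation rat G N.+1) g :
  g \in G -> exists i j, rG g = rG a ^+ i * rG b ^+ j.
Proof.
move=> Gg; have [_ defAB _ _] := dprodP defG.
have : g \in (<[a]> * <[b]>)%g by rewrite defAB.
case/mulsgP => [x y /cycleP [i ->] /cycleP [j ->] ->]; exists i, j.
by rewrite repr_mxM ?groupX // -mulmxE !repr_mxX.
Qed.

Lemma cent_g N (rG : mx_representation rat G N.+1) g : g \in G -> centgmx rG (rG g).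
Proof.
move=> Gg; apply/centgmxP => x Gx.
by rewrite -!repr_mxM // (centsP (abelG defG) g Gg x Gx).
Qed.

Lemma A_pow N (rG : mx_representation rat G N.+1) : rG a ^+ (p ^ n) = 1.
Proof. by rewrite -oa -repr_mxX // expg_order repr_mx1. Qed.

Lemma B_pow N (rG : mx_representation rat G N.+1) : rG b ^+ (p ^ m) = 1.
Proof. by rewrite -ob -repr_mxX // expg_order repr_mx1. Qed.

Lemma Wfacts e N' (M : 'M[rat]_N'.+1) : horner_mx M (Phi p e) = 0 ->
  exists2 f : 'M[rat]_((NP p e).+1, N'.+1), f != 0 &
    forall k, CP p e ^+ k *m f = f *m M ^+ k.
Proof.
move=> PM; set v : 'rV[rat]_N'.+1 := delta_mx 0 0.
exists (\matrix_(i < (NP p e).+1) (v *m M ^+ i)).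
  apply/eqP => /(congr1 (row 0)); rewrite rowK expr0 mulmx1 row0 => /eqP.
  by apply/negP/eqP => /matrixP /(_ 0 0); rewrite !mxE eqxx /= => /eqP; rewrite oner_eq0.
have hC := compan_intertwine (Phi_monic e pp) (Phi_sz e pp p3) v PM.
elim=> [|k IH]; first by rewrite !expr0 mul1mx mulmx1.
by rewrite exprS -mulmxE -mulmxA IH mulmxA -/(CP p e) hC -mulmxA mulmxE -exprS exprSr.
Qed.


Lemma q_gt0 e : (0 < p ^ e)%N.
Proof. by rewrite expn_gt0 prime_gt0. Qed.

Lemma CP_qQ e : CP p e ^+ (p ^ e.+1).-1.+1 = 1.
Proof. by rewrite prednK ?q_gt0 // CP_q. Qed.

Lemma triv_not_irr N (rG : mx_representation rat G N.+1) : (0 < N)%N ->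
  rG a = 1 -> rG b = 1 -> ~ mx_irreducible rG.
Proof.
move=> N0 ra rb /mx_irrP [_ irrG].
set U : 'M[rat]_N.+1 := delta_mx 0 0.
have modU : mxmodule rG U.
  apply/mxmoduleP => g Gg; have [i [j ->]] := repr_ab rG Gg.
  by rewrite ra rb !expr1n mulr1 mulmx1.
have nzU : U != 0.
  by apply/negP => /eqP /matrixP /(_ 0 0); rewrite !mxE eqxx /= => /eqP; rewrite oner_eq0.
have := irrG U modU nzU; rewrite /row_full mxrank_delta.
by case: N N0 {rG ra rb irrG U modU nzU}.
Qed.

Lemma exh e (rG : mx_representation rat G (NP p e).+1) : mx_irreducible rG ->
  (exists y, [/\ (y < p ^ e.+1)%N, (p ^ e.+1 %| y * p ^ m)%N &
     exists2 f, f != 0 & CP p e *m f = f *m rG a /\ CP p e ^+ y *m f = f *m rG b])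
  \/ (exists x, [/\ (x < p ^ e)%N, (e.+1 <= m)%N &
     exists2 f, f != 0 & CP p e ^+ (p * x) *m f = f *m rG a /\ CP p e *m f = f *m rG b]).
Proof.
move=> irrG.
set A := rG a; set B := rG b.
have cA : centgmx rG A := cent_g rG Ga.
have cB : centgmx rG B := cent_g rG Gb.
have An : A ^+ (p ^ n) = 1 := A_pow rG.
have Bm : B ^+ (p ^ m) = 1 := B_pow rG.
have Bn : B ^+ (p ^ n) = 1.
  by rewrite -(subnK le_mn) expnD mulnC exprM Bm expr1n.
have [M [x0 [y0 [cM DA DB x0y0 Mn]]]] : exists M x0 y0,
    [/\ centgmx rG M, A = M ^+ x0, B = M ^+ y0, (x0 == 1%N) || (y0 == 1%N) & M ^+ (p ^ n) = 1].
  case: (irr_cyc defG pp oa ob irrG) => [[k Bk] | [k Ak]].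
    by exists A, 1%N, k; rewrite expr1.
  by exists B, k, 1%N; rewrite expr1 eqxx orbT.
have exR : exists R, M ^+ (p ^ R) == 1 by exists n; rewrite Mn.
case: (ex_minnP exR) => R MR minR.
case: R MR minR => [|R'] MR minR.
  exfalso; rewrite expn0 expr1 in MR.
  have N1 : (0 < NP p e)%N.
    rewrite lt0n; apply/eqP => N0.
    have := NP_S e pp p3; rewrite N0 => E.
    have : (2 * 1 <= p.-1 * p ^ e)%N by rewrite leq_mul ?q_gt0 // -ltnS prednK ?prime_gt0.
    by rewrite -E.
  apply: (triv_not_irr N1) irrG.
    by rewrite -/A DA (eqP MR) expr1n.
  by rewrite -/B DB (eqP MR) expr1n.
have MR' : M ^+ (p ^ R') != 1.
  by apply/negP => /minR; rewrite ltnn.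
have MR1 : M ^+ (p ^ R'.+1) = 1 by apply/eqP.
have PhiM := schur_Phi irrG cM MR1 MR'.
have eR : R' = e.
  have hA : ((p ^ R'.+1).-1.+1 %| x0 * #[a]%g)%N.
    rewrite prednK ?q_gt0 // oa; apply: (expr_pord pp MR1 MR').
    by rewrite exprM -DA An.
  have hB : ((p ^ R'.+1).-1.+1 %| y0 * #[b]%g)%N.
    rewrite prednK ?q_gt0 // ob; apply: (expr_pord pp MR1 MR').
    by rewrite exprM -DB Bm.
  set rG' := mkrep defG (CP_qQ R') hA hB.
  have irr' : mx_irreducible rG'.
    case/orP: x0y0 => /eqP e1.
      by apply: (CP_irr pp p3 Ga); rewrite /rG' mkrep_a e1 expr1.
    by apply: (CP_irr pp p3 Gb); rewrite /rG' mkrep_b e1 expr1.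
  have [f nzf hf] := Wfacts PhiM.
  have sim : mx_rsim rG' rG.
    apply: (rsim_of_hom irr' irrG nzf); apply: (gen_hom defG).
      by rewrite /rG' mkrep_a hf -DA.
    by rewrite /rG' mkrep_b hf -DB.
  have := mxrank_rsim sim; rewrite !NP_S // => /eqP.
  rewrite eqn_pmul2l; last by rewrite -ltnS prednK ?prime_gt0 // ltnW.
  by rewrite eqn_exp2l ?prime_gt1 // => /eqP.
subst R'.
case: (eqVneq (A ^+ (p ^ e)) 1) => [Aq1 | Aq'].
  right.
  have y01 : y0 = 1%N.
    case/orP: x0y0 => /eqP // x01.
    have eAM : A = M by rewrite DA x01 expr1.
    by rewrite -eAM Aq1 eqxx in MR'.
  have DB' : B = M by rewrite DB y01 expr1.
  have px0 : (p %| x0)%N.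
    have : (p ^ e.+1 %| x0 * p ^ e)%N.
      by apply: (expr_pord pp MR1 MR'); rewrite exprM -DA Aq1.
    by rewrite expnS dvdn_pmul2r ?q_gt0.
  set x := ((x0 %% p ^ e.+1) %/ p)%N.
  have px : (p * x = x0 %% p ^ e.+1)%N.
    rewrite /x mulnC divnK //; move: px0; rewrite /dvdn modn_dvdm //.
    by rewrite expnS dvdn_mulr.
  exists x; split.
  - by rewrite /x ltn_divLR ?prime_gt0 // -expnSr ltn_pmod ?q_gt0.
  - have : (p ^ e.+1 %| p ^ m)%N.
      by apply: (expr_pord pp MR1 MR'); rewrite -DB' Bm.
    by rewrite dvdn_Pexp2l ?prime_gt1.
  - have [f nzf hf] := Wfacts PhiM; exists f => //; split.
      by rewrite hf px expr_mod // -DA.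
    by rewrite -[CP p e]expr1 hf expr1 -/B DB'.
left.
have Aq : A ^+ (p ^ e.+1) = 1 by rewrite DA -exprM mulnC exprM MR1 expr1n.
have PhiA := schur_Phi irrG cA Aq Aq'.
have [y' Ey'] : exists y', B = A ^+ y'.
  case/orP: x0y0 => /eqP e1.
    by exists y0; rewrite DB DA e1 expr1.
  have DB' : B = M by rewrite DB e1 expr1.
  have cop : coprime x0 (p ^ e.+1).
    rewrite coprime_sym coprime_pexpl // prime_coprime //.
    apply/negP => px0; case/negP: Aq'; apply/eqP; rewrite DA -exprM.
    by apply: (expr_dvd1 MR1); rewrite expnS dvdn_pmul2r ?q_gt0.
  exists (x0 ^ (totient (p ^ e.+1)).-1)%N; symmetry.
  rewrite DA -exprM -expnS prednK ?totient_gt0 ?q_gt0 //.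
  by rewrite -(expr_mod _ MR1) Euler_exp_totient // expr_mod // expr1.
set y := (y' %% p ^ e.+1)%N.
have By : B = A ^+ y by rewrite /y expr_mod.
exists y; split.
- by rewrite ltn_pmod ?q_gt0.
- by apply: (expr_pord pp Aq Aq'); rewrite exprM -By Bm.
- have [f nzf hf] := Wfacts PhiA; exists f => //; split.
    by rewrite -[CP p e]expr1 hf expr1.
  by rewrite hf -By.
Qed.


Lemma q_pos e : (0 < p ^ e)%N.
Proof. by rewrite expn_gt0 prime_gt0. Qed.

Lemma hA_ok e x : (e.+1 <= n)%N -> ((p ^ e.+1).-1.+1 %| x * #[a]%g)%N.
Proof. by move=> le; rewrite prednK ?q_pos // oa dvdn_mull // dvdn_exp2l. Qed.

Definition Rep e x y (hB : ((p ^ e.+1).-1.+1 %| y * #[b]%g)%N) (le : (e.+1 <= n)%N) :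
  mx_representation rat G (NP p e).+1 := mkrep defG (CP_qQ e) (hA_ok x le) hB.

Lemma Rep_a e x y hB le : @Rep e x y hB le a = CP p e ^+ x.
Proof. exact: mkrep_a. Qed.
Lemma Rep_b e x y hB le : @Rep e x y hB le b = CP p e ^+ y.
Proof. exact: mkrep_b. Qed.

Lemma Rep_ker e x y hB le u v :
  ((a ^+ u * b ^+ v)%g \in rker (@Rep e x y hB le)) = (p ^ e.+1 %| x * u + y * v)%N.
Proof.
have Gau : (a ^+ u)%g \in G by rewrite groupX.
have Gbv : (b ^+ v)%g \in G by rewrite groupX.
rewrite !inE mul1mx groupM // andTb.
have := repr_mxM (@Rep e x y hB le) Gau Gbv => ->.
rewrite !repr_mxX // mulmxE Rep_a Rep_b -!exprM -exprD.
apply/eqP/idP => [H | H]; last exact: expr_dvd1 (CP_q e pp p3) H.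
exact: (expr_pord pp (CP_q e pp p3) (CP_q' e pp p3)).
Qed.

Lemma family_ok e N (xs ys : 'I_N -> nat)
    (hBs : forall i, ((p ^ e.+1).-1.+1 %| ys i * #[b]%g)%N) (le : (e.+1 <= n)%N) :
  (forall i, (xs i == 1%N) || (ys i == 1%N)) ->
  (forall i j, (forall u v, (p ^ e.+1 %| xs i * u + ys i * v)%N =
                            (p ^ e.+1 %| xs j * u + ys j * v)%N) -> i = j) ->
  (forall y, (y < p ^ e.+1)%N -> (p ^ e.+1 %| y * p ^ m)%N ->
      exists i, xs i = 1%N /\ ys i = y) ->
  (forall x, (x < p ^ e)%N -> (e.+1 <= m)%N -> exists i, xs i = (p * x)%N /\ ys i = 1%N) ->
  irr_count_of_degree rat G (NP p e).+1 N.
Proof.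
move=> one inj ex1 ex2.
have irrR i : mx_irreducible (@Rep e (xs i) (ys i) (hBs i) le).
  case/orP: (one i) => /eqP e1.
    by apply: (CP_irr pp p3 Ga); rewrite Rep_a e1 expr1.
  by apply: (CP_irr pp p3 Gb); rewrite Rep_b e1 expr1.
exists (fun i => @Rep e (xs i) (ys i) (hBs i) le); split => //.
  move=> i j /rker_mx_rsim K; apply: inj => u v.
  by rewrite -!Rep_ker K.
move=> rG irrG; case: (exh irrG) => [[y [lty dvy [f nzf [hfa hfb]]]] | [x [ltx lem [f nzf [hfa hfb]]]]].
  have [i [xi yi]] := ex1 y lty dvy; exists i; apply: mx_rsim_sym.
  apply: (rsim_of_hom (irrR i) irrG nzf); apply: (gen_hom defG).
    by rewrite Rep_a xi expr1.
  by rewrite Rep_b yi.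
have [i [xi yi]] := ex2 x ltx lem; exists i; apply: mx_rsim_sym.
apply: (rsim_of_hom (irrR i) irrG nzf); apply: (gen_hom defG).
  by rewrite Rep_a xi.
by rewrite Rep_b yi expr1.
Qed.


Lemma famA e (le_em : (e.+1 <= m)%N) :
  irr_count_of_degree rat G (NP p e).+1 (p ^ e.+1 + p ^ e)%N.
Proof.
have le_en : (e.+1 <= n)%N := leq_trans le_em le_mn.
set q := (p ^ e.+1)%N; set pe := (p ^ e)%N.
have qE : q = (p * pe)%N by rewrite /q expnS.
have pe0 : (0 < pe)%N := q_pos e.
have p1 : (1 < p)%N := prime_gt1 pp.
pose xs (i : 'I_(q + pe)) := if (i < q)%N then 1%N else (p * (i - q))%N.
pose ys (i : 'I_(q + pe)) := if (i < q)%N then (i : nat) else 1%N.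
have hBs i : ((p ^ e.+1).-1.+1 %| ys i * #[b]%g)%N.
  by rewrite prednK ?q_pos // ob dvdn_mull // dvdn_exp2l.
apply: (@family_ok e _ xs ys hBs le_en).
- by move=> i; rewrite /xs /ys; case: ifP; rewrite eqxx ?orbT.
- move=> i j H; apply: val_inj => /=.
  have lti := ltn_ord i; have ltj := ltn_ord j.
  have Hpe : (q %| pe)%N = false.
    by apply/negP => /(dvdn_leq pe0); rewrite qE leqNgt -{1}[pe]mul1n ltn_mul2r pe0 p1.
  have Hq k : (q %| p * k * pe)%N by rewrite mulnAC -qE dvdn_mulr.
  rewrite /xs /ys in H.
  case: (ltnP i q) => iq; case: (ltnP j q) => jq; rewrite ?iq ?jq in H.
  + have := H (q - i)%N 1%N; rewrite !mul1n !muln1 (subnK (ltnW iq)) dvdnn => /esym D.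
    by rewrite (ar_eq iq (band D (ar_pos _ iq) (ar_lt iq jq))).
  + by have := H pe 0%N; rewrite (leq_gtF jq) !mul1n !muln0 !addn0 -/q Hpe Hq.
  + by have := H pe 0%N; rewrite (leq_gtF iq) !mul1n !muln0 !addn0 -/q Hpe Hq.
  + rewrite (leq_gtF iq) (leq_gtF jq) in H.
    have lt1 : (p * (i - q) < q)%N.
      have : (i - q < pe)%N by rewrite ltn_subLR.
      by move=> h; rewrite [X in (_ < X)%N]qE ltn_pmul2l ?prime_gt0.
    have lt2 : (p * (j - q) < q)%N.
      have : (j - q < pe)%N by rewrite ltn_subLR.
      by move=> h; rewrite [X in (_ < X)%N]qE ltn_pmul2l ?prime_gt0.
    have := H 1%N (q - p * (i - q))%N; rewrite !muln1 !mul1n (subnKC (ltnW lt1)) dvdnn.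
    move=> /esym; rewrite addnC => D.
    have E' := ar_eq lt1 (band D (ar_pos _ lt1) (ar_lt lt1 lt2)).
    move: E'; move/eqP; rewrite eqn_pmul2l ?prime_gt0 // => /eqP E.
    by rewrite -(subnK iq) -(subnK jq) E.
- move=> y lty _.
  have ly : (y < q + pe)%N by rewrite ltn_addr.
  by exists (Ordinal ly); rewrite /xs /ys /= lty.
- move=> x ltx _.
  have lx : (q + x < q + pe)%N by rewrite ltn_add2l.
  exists (Ordinal lx); rewrite /xs /ys /= ltnNge leq_addr /=.
  by rewrite addKn.
Qed.

Lemma famB e (lt_me : (m < e.+1)%N) (le_en : (e.+1 <= n)%N) :
  irr_count_of_degree rat G (NP p e).+1 (p ^ m)%N.
Proof.
set q := (p ^ e.+1)%N; set k := (p ^ (e.+1 - m))%N.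
have qE : q = (k * p ^ m)%N by rewrite /q /k -expnD subnK // ltnW.
have k0 : (0 < k)%N := q_pos _.
pose xs (i : 'I_(p ^ m)) := 1%N.
pose ys (i : 'I_(p ^ m)) := (k * i)%N.
have hBs i : ((p ^ e.+1).-1.+1 %| ys i * #[b]%g)%N.
  by rewrite prednK ?q_pos // ob /ys mulnAC -qE dvdn_mulr.
have ltys i : (ys i < q)%N by rewrite /ys qE ltn_pmul2l.
apply: (@family_ok e _ xs ys hBs le_en).
- by move=> i; rewrite /xs eqxx.
- move=> i j H; apply: val_inj => /=.
  have := H (q - ys i)%N 1%N; rewrite /xs !mul1n !muln1 (subnK (ltnW (ltys i))) dvdnn.
  move=> /esym D.
  have E' := ar_eq (ltys i) (band D (ar_pos _ (ltys i)) (ar_lt (ltys i) (ltys j))).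
  by move: E'; rewrite /ys => /eqP; rewrite eqn_pmul2l // => /eqP.
- move=> y lty dvy.
  have : (k %| y)%N by rewrite -(dvdn_pmul2r (q_pos m)) -qE.
  case/dvdnP => c Ey.
  have lc : (c < p ^ m)%N by rewrite -(ltn_pmul2l k0) -qE mulnC -Ey.
  by exists (Ordinal lc); rewrite /xs /ys /= Ey mulnC.
- by move=> x _ le; rewrite leqNgt lt_me in le.
Qed.

End Main.

Lemma rat_odd_root1 (c : rat) k : odd k -> c ^+ k = 1 -> c = 1.
Proof.
move=> ok ck.
have k0 : (0 < k)%N by case: k ok {ck}.
have : `|c| ^+ k == 1 by rewrite -normrX ck normr1.
rewrite pexpr_eq1 ?normr_ge0 // eqr_norml ler01 andbT => /orP [/eqP // | /eqP cm1].
have F : ((-1 : rat) == 1) = false by [].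
by move: ck; rewrite cm1 -signr_odd ok expr1 => /eqP; rewrite F.
Qed.

Lemma mx1_odd_root1 (M : 'M[rat]_1) k : odd k -> M ^+ k = 1 -> M = 1.
Proof.
move=> ok Mk; rewrite [M]mx11_scalar.
have E : forall j, (M 0 0)%:M ^+ j = ((M 0 0) ^+ j)%:M :> 'M[rat]_1.
  elim=> [|j IH]; first by rewrite !expr0.
  by rewrite !exprS IH -mulmxE -scalar_mxM.
have : ((M 0 0) ^+ k)%:M = (1 : 'M[rat]_1) by rewrite -E -mx11_scalar.
move/(congr1 (fun A : 'M[rat]_1 => A 0 0)); rewrite !mxE /= mulr1n => /(rat_odd_root1 ok) ->.
done.
Qed.

Section Deg1.
Variables (gT : finGroupType) (G : {group gT}) (a b : gT).
Hypothesis defG : (<[a]> \x <[b]>)%g = G.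
Variables (p n m : nat).
Hypotheses (pp : prime p) (op : odd p)
  (oa : #[a]%g = (p ^ n)%N) (ob : #[b]%g = (p ^ m)%N).

Lemma triv_mx_repr : mx_repr G (fun _ : gT => (1%:M : 'M[rat]_1)).
Proof. by split=> // x y _ _; rewrite mulmx1. Qed.

Definition triv1 := MxRepresentation triv_mx_repr.

Lemma deg1 : irr_count_of_degree rat G 1%N 1%N.
Proof.
have irr1 : mx_irreducible triv1.
  apply/mx_irrP; split=> // U _ nzU.
  by rewrite /row_full eqn_leq rank_leq_col lt0n mxrank_eq0 nzU.
exists (fun _ => triv1); split=> //.
  by move=> i j _; rewrite !ord1.
move=> rG irrG; exists ord0; apply: (gen_eq defG).
  apply: (mx1_odd_root1 (k := (p ^ n)%N)); first by rewrite oddX op orbT.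
  by rewrite -oa -repr_mxX ?(Ga defG) // expg_order repr_mx1.
apply: (mx1_odd_root1 (k := (p ^ m)%N)); first by rewrite oddX op orbT.
by rewrite -ob -repr_mxX ?(Gb defG) // expg_order repr_mx1.
Qed.

End Deg1.

Lemma sum_tot p r : prime p -> (\sum_(k < r.+1) totient (p ^ k))%N = (p ^ r)%N.
Proof.
move=> pp; elim: r => [|r IH]; first by rewrite big_ord1 expn0.
rewrite big_ord_recr /= IH totient_pfactor //= expnS.
by rewrite -{1}[(p ^ r)%N]mul1n -mulnDl add1n prednK ?prime_gt0.
Qed.

Local Close Scope ring_scope.

Theorem proposition2p3 (p n m : nat) (gT : finGroupType) (G : {group gT})
    (a b : gT) :
  prime p -> odd p -> 0 < m -> m <= n ->
  (<[a]> \x <[b]>)%g = G -> #[a]%g = p ^ n -> #[b]%g = p ^ m ->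
  [/\ irr_count_of_degree rat G 1 1,
      forall r, 1 <= r <= m ->
        irr_count_of_degree rat G (totient (p ^ r))
          (2 * (\sum_(k < r) totient (p ^ k)) + totient (p ^ r))
        /\ 2 * (\sum_(k < r) totient (p ^ k)) + totient (p ^ r)
           = p ^ r + p ^ r.-1
    & forall r, m < r <= n ->
        irr_count_of_degree rat G (totient (p ^ r))
          (\sum_(k < m.+1) totient (p ^ k))
        /\ \sum_(k < m.+1) totient (p ^ k) = p ^ m].
Proof.
move=> pp op m0 le_mn defG oa ob.
have p3 : (2 < p)%N.
  move: (prime_gt1 pp) op; case: (p) => [|[|[|]]] //.
split.
- have h := deg1 defG op oa ob; exact h.
- case=> [|e] // /andP [_ le_em].
  rewrite (sum_tot e pp).
  have T : totient (p ^ e.+1) = (NP p e).+1 by rewrite NP_S // totient_pfactor.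
  have cnt : (2 * p ^ e + totient (p ^ e.+1) = p ^ e.+1 + p ^ e)%N.
    rewrite totient_pfactor //= expnS.
    have hp := prime_gt0 pp; move: (p ^ e)%N => k; nia.
  rewrite cnt; split=> //; rewrite T.
  have h := famA defG pp p3 le_mn oa ob le_em; exact h.
- case=> [|e] // /andP [lt_me le_en].
  rewrite (sum_tot m pp); split=> //.
  rewrite totient_pfactor // -NP_S //.
  have h := famB defG pp p3 le_mn oa ob lt_me le_en; exact h.
Qed.
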